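(* Let $0<A_1<A_2<\infty$, $f_1=f(\cdot;A_1)$, $f_2=f(\cdot;A_2)$, and let $\Xi\in(0,\infty)$ be such that $f_1(\xi)>0$, $f_1'(\xi)<0$ and $f_2'(\xi)<0$ for all $\xi\in(0,\Xi)$. Then $f_1(\xi)<f_2(\xi)$ for all $\xi\in(0,\Xi)$.
   Context: Let $N\geq1$, $m>1$, $\sigma>0$, $p>m$, $L=\sigma(m-1)+2(p-1)$, $\alpha=(\sigma+2)/L$, $\beta=(p-m)/L$. For $A>0$, $f(\cdot;A)$ denotes the unique solution of $$(f^m)''+\frac{N-1}{\xi}(f^m)'+\alpha f+\beta\xi f'-\xi^{\sigma}f^p=0,\qquad f(0)=A,\ f'(0)=0,$$ positive on a maximal interval $[0,\xi_{\max}(A))$ with $f^m\in C^2$ there. *)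

(* Defs.v *)
From Stdlib Require Import Reals.
From Coquelicot Require Import Coquelicot.
Open Scope R_scope.

Definition Lpar (m sigma p : R) : R := sigma * (m - 1) + 2 * (p - 1).
Definition alpha (m sigma p : R) : R := (sigma + 2) / Lpar m sigma p.
Definition beta (m sigma p : R) : R := (p - m) / Lpar m sigma p.

Definition std_params (N : nat) (m sigma p : R) : Prop :=
  (1 <= N)%nat /\ 1 < m /\ 0 < sigma /\ m < p.

Definition fm (m : R) (f : R -> R) : R -> R := fun x => Rpower (f x) m.

Definition ode_residual (N : nat) (m sigma p : R) (f : R -> R) (xi : R) : R :=
  Derive_n (fm m f) 2 xi
  + (INR N - 1) / xi * Derive (fm m f) xi
  + alpha m sigma p * f xi
  + beta m sigma p * xi * Derive f xi
  - Rpower xi sigma * Rpower (f xi) p.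

(* [is_sol_on N m sigma p A f X]: f solves the initial value problem
   (f^m)'' + (N-1)/xi (f^m)' + alpha f + beta xi f' - xi^sigma f^p = 0,
   f(0) = A, f'(0) = 0, on the interval [0, X), is positive there, and
   f^m is C^2 on [0, X) (derivatives at 0 understood one-sidedly). *)
Definition is_sol_on (N : nat) (m sigma p A : R) (f : R -> R) (X : R) : Prop :=
  f 0 = A /\
  (forall xi, 0 <= xi < X -> 0 < f xi) /\
  filterlim f (at_right 0) (locally A) /\
  filterlim (fun h => (f h - f 0) / h) (at_right 0) (locally 0) /\
  (forall xi, 0 < xi < X ->
     ex_derive f xi /\ ex_derive (fm m f) xi /\
     ex_derive (Derive (fm m f)) xi /\
     continuous (Derive_n (fm m f) 2) xi) /\
  filterlim (Derive (fm m f)) (at_right 0) (locally 0) /\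
  (exists l, filterlim (Derive_n (fm m f) 2) (at_right 0) (locally l)) /\
  (forall xi, 0 < xi < X -> ode_residual N m sigma p f xi = 0).

(* Main.v *)
Require Import Defs.
From Stdlib Require Import Reals Lra Lia Classical.
From Coquelicot Require Import Coquelicot.
Open Scope R_scope.


Lemma locally_of (x : R) (P : R -> Prop) :
  (exists d, 0 < d /\ forall y, Rabs (y - x) < d -> P y) -> locally x P.
Proof.
  intros [d [Hd H]]. exists (mkposreal d Hd). intros y Hy. apply H. exact Hy.
Qed.

Lemma lim_r (f : R -> R) (l : R) :
  filterlim f (at_right 0) (locally l) ->
  forall e, 0 < e -> exists d, 0 < d /\ forall x, 0 < x < d -> Rabs (f x - l) < e.
Proof.
  intros H e He.
  assert (Hl : locally l (fun y => Rabs (y - l) < e)).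
  { exists (mkposreal e He). intros y Hy. exact Hy. }
  specialize (H _ Hl). destruct H as [d Hd].
  exists d. split. apply cond_pos. intros x [Hx1 Hx2]. apply Hd; [|exact Hx1].
  change (Rabs (x - 0) < d). rewrite Rminus_0_r, Rabs_right; lra.
Qed.

Lemma cont_of (f : R -> R) (x : R) :
  (forall e, 0 < e -> exists d, 0 < d /\ forall y, Rabs (y - x) < d -> Rabs (f y - f x) < e) ->
  continuity_pt f x.
Proof.
  intros H. apply continuity_pt_filterlim. intros P [e He].
  destruct (H e (cond_pos e)) as [d [Hd Hd']].
  exists (mkposreal d Hd). intros y Hy. apply He. apply Hd'. exact Hy.
Qed.

Lemma cont_of_ex (f : R -> R) (x : R) : ex_derive f x -> continuity_pt f x.
Proof. intros H. apply derivable_continuous_pt. apply ex_derive_Reals_0. exact H. Qed.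

Lemma cont_eps (f : R -> R) (x : R) : continuity_pt f x ->
  forall e, 0 < e -> exists d, 0 < d /\ forall y, Rabs (y - x) < d -> Rabs (f y - f x) < e.
Proof.
  intros H e He. apply continuity_pt_filterlim in H.
  assert (Hl : locally (f x) (fun y => Rabs (y - f x) < e)).
  { exists (mkposreal e He). intros y Hy. exact Hy. }
  destruct (H _ Hl) as [d Hd]. exists d. split. apply cond_pos. intros y Hy. apply Hd. exact Hy.
Qed.

Lemma min_deriv0 (h : R -> R) a b c :
  a < c < b -> (forall x, a < x < b -> h c <= h x) -> ex_derive h c -> Derive h c = 0.
Proof.
  intros Hc Hm He. pose proof (ex_derive_Reals_0 _ _ He) as pr.
  rewrite <- (Derive_Reals _ _ pr). apply (deriv_minimum h a b c pr); try lra.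
  intros; apply Hm; lra.
Qed.

Lemma min_deriv2 (h : R -> R) a b c :
  a < c < b -> (forall x, a < x < b -> h c <= h x) ->
  (forall x, a < x < b -> ex_derive h x) -> Derive h c = 0 ->
  ex_derive (Derive h) c -> 0 <= Derive (Derive h) c.
Proof.
  intros Hc Hm He H0 H2.
  destruct (Rle_or_lt 0 (Derive (Derive h) c)) as [|Hd]; [assumption|exfalso].
  set (d := Derive (Derive h) c) in *.
  assert (Hl : derivable_pt_lim (Derive h) c d).
  { apply is_derive_Reals. apply Derive_correct. exact H2. }
  destruct (Hl (- d / 2)) as [del Hdel]; [lra|].
  set (t := Rmin (del / 2) ((b - c) / 2)).
  assert (Ht : 0 < t) by (unfold t; apply Rmin_pos; pose proof (cond_pos del); lra).
  assert (Ht1 : t <= del / 2) by apply Rmin_l.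
  assert (Ht2 : t <= (b - c) / 2) by apply Rmin_r.
  destruct (MVT_cor2 h (Derive h) c (c + t)) as [z [Hz1 Hz2]]; [lra| |].
  { intros z Hz. apply is_derive_Reals. apply Derive_correct. apply He. lra. }
  assert (Hneg : Derive h z < 0).
  { specialize (Hdel (z - c)).
    assert (z - c <> 0) by lra.
    assert (Rabs (z - c) < del) by (rewrite Rabs_right; lra).
    specialize (Hdel H H1). replace (c + (z - c)) with z in Hdel by ring.
    rewrite H0, Rminus_0_r in Hdel.
    apply Rabs_def2 in Hdel. destruct Hdel as [Hd1 Hd2].
    assert (Derive h z / (z - c) < 0) by lra.
    assert (0 < z - c) by lra.
    destruct (Rle_or_lt 0 (Derive h z)); [|assumption].
    exfalso. assert (0 <= Derive h z / (z - c)).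
    { unfold Rdiv. apply Rmult_le_pos; [lra|]. left; apply Rinv_0_lt_compat; lra. }
    lra. }
  assert (h (c + t) - h c < 0).
  { rewrite Hz1. apply Rmult_neg_pos; lra. }
  specialize (Hm (c + t)). assert (h c <= h (c + t)) by (apply Hm; lra). lra.
Qed.

Definition lim0 (h : R -> R) := forall e, 0 < e -> exists d, 0 < d /\ forall x, 0 < x < d -> Rabs (h x) < e.

Lemma cmp0 (F P F' P' : R -> R) eps :
  (forall x, 0 < x <= eps -> is_derive F x (F' x)) ->
  (forall x, 0 < x <= eps -> is_derive P x (P' x)) ->
  (forall x, 0 < x <= eps -> F' x <= P' x) ->
  lim0 (fun x => F x - P x) ->
  forall x, 0 < x <= eps -> F x <= P x.
Proof.
  intros HF HP Hle Hlim x Hx.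
  destruct (Rle_or_lt (F x) (P x)) as [|Hc]; [assumption|exfalso].
  destruct (Hlim (F x - P x)) as [d [Hd Hd']]; [lra|].
  set (y := Rmin (d / 2) (x / 2)).
  assert (0 < y) by (unfold y; apply Rmin_pos; lra).
  assert (y <= d / 2) by apply Rmin_l. assert (y <= x / 2) by apply Rmin_r.
  destruct (MVT_cor2 (fun t => F t - P t) (fun t => F' t - P' t) y x) as [z [Hz1 Hz2]]; [lra| |].
  { intros z Hz. apply derivable_pt_lim_minus; apply is_derive_Reals; [apply HF|apply HP]; lra. }
  assert ((F' z - P' z) * (x - y) <= 0).
  { apply Rmult_le_0_r; [|lra]. assert (F' z <= P' z) by (apply Hle; lra). lra. }
  specialize (Hd' y). assert (Rabs (F y - P y) < F x - P x) by (apply Hd'; lra).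
  apply Rabs_def2 in H3. lra.
Qed.

Lemma dec_of (f : R -> R) a b :
  (forall x, a < x < b -> ex_derive f x /\ Derive f x < 0) ->
  forall x y, a < x -> x < y -> y < b -> f y < f x.
Proof.
  intros H x y Hx Hxy Hy.
  destruct (MVT_cor2 f (Derive f) x y) as [z [Hz1 Hz2]]; [lra| |].
  { intros z Hz. apply is_derive_Reals. apply Derive_correct. apply H. lra. }
  assert (Derive f z < 0) by (apply H; lra).
  assert (Derive f z * (y - x) < 0) by (apply Rmult_neg_pos; lra). lra.
Qed.

Lemma rp_mvt a x y : 0 < y < x ->
  exists c, y < c < x /\ Rpower x a - Rpower y a = a * Rpower c (a - 1) * (x - y).
Proof.
  intros H.
  destruct (MVT_cor2 (fun t => Rpower t a) (fun t => a * Rpower t (a - 1)) y x) as [z [Hz1 Hz2]]; [lra| |].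
  { intros z Hz. apply derivable_pt_lim_power. lra. }
  exists z. split; [lra|]. rewrite Hz1. ring.
Qed.

Lemma rp_lower a x y : 1 <= a -> 0 < y <= x ->
  a * Rpower y (a - 1) * (x - y) <= Rpower x a - Rpower y a.
Proof.
  intros Ha Hy. destruct (Req_dec x y) as [->|Hne].
  { replace (y - y) with 0 by ring. replace (Rpower y a - Rpower y a) with 0 by ring. lra. }
  destruct (rp_mvt a x y) as [c [Hc Heq]]; [lra|]. rewrite Heq.
  apply Rmult_le_compat_r; [lra|]. apply Rmult_le_compat_l; [lra|].
  apply Rle_Rpower_l; lra.
Qed.

Lemma rp_upper a x y : 1 <= a -> 0 < y <= x ->
  Rpower x a - Rpower y a <= a * Rpower x (a - 1) * (x - y).
Proof.
  intros Ha Hy. destruct (Req_dec x y) as [->|Hne].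
  { replace (y - y) with 0 by ring. replace (Rpower y a - Rpower y a) with 0 by ring. lra. }
  destruct (rp_mvt a x y) as [c [Hc Heq]]; [lra|]. rewrite Heq.
  apply Rmult_le_compat_r; [lra|]. apply Rmult_le_compat_l; [lra|].
  apply Rle_Rpower_l; lra.
Qed.

Lemma rp_pos x a : 0 < Rpower x a.
Proof. unfold Rpower. apply exp_pos. Qed.

Lemma rp_le1 x a : 0 < x <= 1 -> 0 <= a -> Rpower x a <= 1.
Proof.
  intros Hx Ha. apply Rle_trans with (Rpower 1 a).
  - apply Rle_Rpower_l; lra.
  - right. unfold Rpower. rewrite ln_1, Rmult_0_r. apply exp_0.
Qed.


Lemma der_lin (h : R -> R) c s x : ex_derive h (s * x) ->
  is_derive (fun t => c * h (s * t)) x (c * s * Derive h (s * x)).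
Proof.
  intros H. rewrite Rmult_assoc. apply is_derive_scal.
  assert (H1 : is_derive (fun t => s * t) x s).
  { auto_derive; auto; ring. }
  pose proof (is_derive_comp h (fun t => s * t) x (Derive h (s * x)) s (Derive_correct _ _ H) H1) as H2.
  exact H2.
Qed.

Lemma sol_ex (N : nat) m sigma p A f X x : is_sol_on N m sigma p A f X -> 0 < x < X ->
  ex_derive f x /\ ex_derive (fm m f) x /\ ex_derive (Derive (fm m f)) x.
Proof.
  intros [_ [_ [_ [_ [H _]]]]] Hx. destruct (H x Hx) as [a [b [c _]]]. auto.
Qed.

Lemma sol_dec (N : nat) m sigma p A f X : is_sol_on N m sigma p A f X ->
  (forall x, 0 < x < X -> Derive f x < 0) ->
  forall x y, 0 < x -> x < y -> y < X -> f y < f x.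
Proof.
  intros Hs Hd. apply dec_of. intros x Hx. split.
  - apply (sol_ex N m sigma p A f X x Hs Hx).
  - apply Hd; exact Hx.
Qed.

Lemma sol_ltA (N : nat) m sigma p A f X : is_sol_on N m sigma p A f X ->
  (forall x, 0 < x < X -> Derive f x < 0) ->
  forall x, 0 < x < X -> f x < A.
Proof.
  intros Hs Hd x Hx.
  pose proof (sol_dec _ _ _ _ _ _ _ Hs Hd) as Hdec.
  destruct Hs as [_ [_ [Hl _]]].
  destruct (Rlt_or_le (f x) A) as [|HA]; [assumption|exfalso].
  assert (Hx2 : f x < f (x / 2)) by (apply Hdec; lra).
  destruct (lim_r f A Hl (f (x/2) - f x)) as [d [Hd0 Hd1]]; [lra|].
  set (y := Rmin (d/2) (x/4)).
  assert (0 < y) by (unfold y; apply Rmin_pos; lra).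
  assert (y <= d/2) by apply Rmin_l. assert (y <= x/4) by apply Rmin_r.
  assert (f (x/2) < f y) by (apply Hdec; lra).
  specialize (Hd1 y). assert (Rabs (f y - A) < f (x / 2) - f x) by (apply Hd1; lra).
  apply Rabs_def2 in H3. lra.
Qed.

Lemma sol_leA (N : nat) m sigma p A f X : is_sol_on N m sigma p A f X ->
  (forall x, 0 < x < X -> Derive f x < 0) ->
  forall x, 0 <= x < X -> f x <= A.
Proof.
  intros Hs Hd x Hx. destruct (Req_dec x 0) as [->|].
  - destruct Hs as [H0 _]. lra.
  - left. apply (sol_ltA N m sigma p A f X Hs Hd). lra.
Qed.


Lemma loc_in x X s : 0 < s -> 0 < x -> s * x < X ->
  locally x (fun t => 0 < t /\ s * t < X).
Proof.
  intros Hs Hx HX. apply locally_of.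
  exists (Rmin x (X / s - x)). split.
  - apply Rmin_pos; [lra|]. apply Rlt_Rminus. apply (Rmult_lt_reg_l s); [lra|].
    field_simplify; lra.
  - intros y Hy. assert (Hy1 := Rlt_le_trans _ _ _ Hy (Rmin_l _ _)).
    assert (Hy2 := Rlt_le_trans _ _ _ Hy (Rmin_r _ _)).
    apply Rabs_def2 in Hy1. apply Rabs_def2 in Hy2. split; [lra|].
    assert (y < X / s) by lra.
    apply (Rmult_lt_reg_l (/ s)). apply Rinv_0_lt_compat; lra.
    replace (/ s * (s * y)) with y by (field; lra). unfold Rdiv in H. lra.
Qed.

Lemma loc_imp (x : R) (P Q : R -> Prop) : locally x P -> (forall t, P t -> Q t) -> locally x Q.
Proof. intros [e He] H. exists e. intros y Hy. apply H, He, Hy. Qed.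

Lemma fm_scale m nu s f t : 0 < nu -> 0 < f (s * t) ->
  fm m (fun x => nu * f (s * x)) t = Rpower nu m * fm m f (s * t).
Proof. intros H1 H2. unfold fm. rewrite Rpower_mult_distr; auto. Qed.


Lemma scale_all (N : nat) m sigma p A f X nu s x :
  is_sol_on N m sigma p A f X -> 0 < nu -> 0 < s -> 0 < x -> s * x < X ->
  let g := fun t => nu * f (s * t) in
  (ex_derive g x /\ Derive g x = nu * s * Derive f (s * x)) /\
  (ex_derive (fm m g) x /\ Derive (fm m g) x = Rpower nu m * s * Derive (fm m f) (s * x)) /\
  (ex_derive (Derive (fm m g)) x /\
     Derive (Derive (fm m g)) x = Rpower nu m * s * s * Derive (Derive (fm m f)) (s * x)).
Proof.
  intros Hs Hnu Hs0 Hx HX g.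
  assert (Hpos : forall t, 0 < t /\ s * t < X -> 0 < f (s * t)).
  { intros t Ht. destruct Hs as [_ [Hp _]]. apply Hp. nra. }
  assert (Hex : forall t, 0 < t /\ s * t < X ->
     ex_derive f (s * t) /\ ex_derive (fm m f) (s * t) /\ ex_derive (Derive (fm m f)) (s * t)).
  { intros t Ht. apply (sol_ex N m sigma p A f X); [exact Hs|nra]. }
  assert (Hloc := loc_in x X s Hs0 Hx HX).
  assert (Hfm : locally x (fun t => fm m g t = Rpower nu m * fm m f (s * t))).
  { apply (loc_imp _ _ _ Hloc). intros t Ht. unfold g. apply fm_scale; auto. }
  assert (Hd1 : forall t, 0 < t /\ s * t < X ->
     is_derive (fm m g) t (Rpower nu m * s * Derive (fm m f) (s * t))).
  { intros t Ht. assert (Hl := loc_in t X s Hs0 (proj1 Ht) (proj2 Ht)).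
    apply (is_derive_ext_loc (fun t => Rpower nu m * fm m f (s * t))).
    - apply (loc_imp _ _ _ Hl). intros y Hy. symmetry. unfold g. apply fm_scale; auto.
    - apply der_lin. apply Hex. exact Ht. }
  assert (HD1 : locally x (fun t => Derive (fm m g) t = Rpower nu m * s * Derive (fm m f) (s * t))).
  { apply (loc_imp _ _ _ Hloc). intros t Ht. apply is_derive_unique. apply Hd1. exact Ht. }
  assert (Hxx : 0 < x /\ s * x < X) by auto.
  split; [|split].
  - split. exists (nu * s * Derive f (s * x)). apply der_lin. apply Hex; auto.
    apply is_derive_unique. apply der_lin. apply Hex; auto.
  - split. eexists. apply Hd1; auto. apply is_derive_unique. apply Hd1; auto.
  - assert (H3 : is_derive (Derive (fm m g)) x (Rpower nu m * s * s * Derive (Derive (fm m f)) (s * x))).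
    { apply (is_derive_ext_loc (fun t => Rpower nu m * s * Derive (fm m f) (s * t))).
      - apply (loc_imp _ _ _ HD1). intros t Ht. symmetry. exact Ht.
      - apply der_lin. apply Hex; auto. }
    split. eexists. exact H3. apply is_derive_unique. exact H3.
Qed.


Lemma Dn2 (f : R -> R) z : Derive_n f 2 z = Derive (Derive f) z.
Proof. reflexivity. Qed.

Lemma res_scale (N : nat) m sigma p A f X nu x :
  is_sol_on N m sigma p A f X -> 0 < nu ->
  let K := Rpower nu ((m - 1) / 2) in
  let s := / K in
  0 < x -> s * x < X ->
  ode_residual N m sigma p (fun t => nu * f (s * t)) x =
  nu * Rpower (s * x) sigma * Rpower (f (s * x)) p *
    (1 - Rpower nu ((m - 1) / 2 * sigma + p - 1)).
Proof.
  intros Hs Hnu K s Hx HX.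
  assert (HK : 0 < K) by apply rp_pos.
  assert (Hs0 : 0 < s) by (apply Rinv_0_lt_compat; exact HK).
  destruct (scale_all N m sigma p A f X nu s x Hs Hnu Hs0 Hx HX) as [[_ E1] [[_ E2] [_ E3]]].
  set (y := s * x).
  assert (Hy : 0 < y < X) by (unfold y; split; [nra|exact HX]).
  assert (Hres : ode_residual N m sigma p f y = 0).
  { destruct Hs as [_ [_ [_ [_ [_ [_ [_ Hr]]]]]]]. apply Hr. exact Hy. }
  assert (Hfy : 0 < f y) by (destruct Hs as [_ [Hp _]]; apply Hp; lra).
  assert (Hxy : x = y * K) by (unfold y, s; field; lra).
  assert (Ha : Rpower nu m = nu * K * K).
  { unfold K. transitivity (Rpower nu (1 + (m-1)/2 + (m-1)/2)).
    - f_equal. field.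
    - rewrite !Rpower_plus, Rpower_1; auto. }
  assert (Hxs : Rpower x sigma = Rpower y sigma * Rpower K sigma).
  { rewrite Hxy. symmetry. apply Rpower_mult_distr; lra. }
  assert (HKs : Rpower K sigma = Rpower nu ((m - 1) / 2 * sigma)).
  { unfold K. apply Rpower_mult. }
  assert (Hg : Rpower (nu * f y) p = Rpower nu p * Rpower (f y) p).
  { symmetry. apply Rpower_mult_distr; lra. }
  assert (Hpow : Rpower nu ((m - 1) / 2 * sigma + p - 1) * nu =
                 Rpower nu ((m - 1) / 2 * sigma) * Rpower nu p).
  { transitivity (Rpower nu ((m - 1) / 2 * sigma + p - 1 + 1)).
    - rewrite Rpower_plus, Rpower_1; auto.
    - rewrite <- Rpower_plus. f_equal. ring. }
  unfold ode_residual in *. rewrite Dn2 in *. fold y.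
  rewrite E1, E2, E3, Hxs, HKs, Hg, Ha. fold y.
  assert (Hd : forall a b c d e : R, a = 0 -> True) by auto.
  rewrite Hxy. unfold s.
  replace (nu * (Rpower y sigma * Rpower (f y) p) * (1 - Rpower nu ((m - 1) / 2 * sigma + p - 1)))
    with (nu * Rpower y sigma * Rpower (f y) p - Rpower y sigma * Rpower (f y) p * (Rpower nu ((m - 1) / 2 * sigma + p - 1) * nu)) by ring.
  change (Derive (fun x => Derive (fun x0 => fm m f x0) x) y) with (Derive (Derive (fm m f)) y) in Hres.
  replace (Rpower y sigma * Rpower nu ((m - 1) / 2 * sigma) * (Rpower nu p * Rpower (f y) p))
    with (Rpower y sigma * Rpower (f y) p * (Rpower nu ((m - 1) / 2 * sigma + p - 1) * nu))
    by (rewrite Hpow; ring).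
  replace (Derive (Derive (fm m f)) y) with
    (Rpower y sigma * Rpower (f y) p - ((INR N - 1) / y * Derive (fm m f) y + alpha m sigma p * f y +
     beta m sigma p * y * Derive f y)) by lra.
  field. lra.
Qed.


Lemma Kgt1 m nu : 1 < m -> 1 < nu -> 1 < Rpower nu ((m - 1) / 2).
Proof.
  intros Hm Hnu. rewrite <- (Rpower_O nu) at 1 by lra. apply Rpower_lt; lra.
Qed.

Lemma res_neg (N : nat) m sigma p A f X nu x :
  std_params N m sigma p ->
  is_sol_on N m sigma p A f X -> 1 < nu ->
  let K := Rpower nu ((m - 1) / 2) in
  let s := / K in
  0 < x -> s * x < X ->
  ode_residual N m sigma p (fun t => nu * f (s * t)) x < 0.
Proof.
  intros [HN [Hm [Hsig Hp]]] Hs Hnu K0 s0 Hx HX.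
  unfold s0, K0 in *. clear s0 K0.
  rewrite (res_scale N m sigma p A f X nu x Hs ltac:(lra) Hx HX).
  set (K := Rpower nu ((m - 1) / 2)) in *. set (s := / K) in *.
  assert (HK : 0 < K) by apply rp_pos.
  assert (0 < s) by (apply Rinv_0_lt_compat; exact HK).
  assert (0 < f (s * x)) by (destruct Hs as [_ [Hp0 _]]; apply Hp0; split; [nra|lra]).
  assert (1 < Rpower nu ((m - 1) / 2 * sigma + p - 1)).
  { rewrite <- (Rpower_O nu) at 1 by lra. apply Rpower_lt; [lra|].
    assert (0 < (m - 1) / 2 * sigma) by (apply Rmult_lt_0_compat; lra). lra. }
  assert (0 < nu * Rpower (s * x) sigma * Rpower (f (s * x)) p).
  { apply Rmult_lt_0_compat; [apply Rmult_lt_0_compat; [lra|apply rp_pos]|apply rp_pos]. }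
  nra.
Qed.

Lemma tangency (N : nat) m sigma p A1 A2 f1 f2 X nu b c :
  std_params N m sigma p ->
  is_sol_on N m sigma p A1 f1 X -> is_sol_on N m sigma p A2 f2 X -> 1 < nu ->
  0 < b <= X ->
  let K := Rpower nu ((m - 1) / 2) in
  let s := / K in
  let g := fun t => nu * f1 (s * t) in
  (forall t, 0 < t < b -> f2 t <= g t) -> 0 < c < b -> g c = f2 c -> False.
Proof.
  intros Hpar H1 H2 Hnu Hb K s g Hle Hc Heq.
  assert (HK : 1 < K) by (apply Kgt1; [apply Hpar|lra]).
  assert (Hs0 : 0 < s) by (apply Rinv_0_lt_compat; lra).
  assert (Hs1 : s < 1) by (unfold s; rewrite <- Rinv_1; apply Rinv_lt_contravar; lra).
  assert (Hin : forall t, 0 < t < b -> s * t < X) by (intros; nra).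
  assert (Hsc : forall t, 0 < t < b -> _) by (intros t Ht; exact (scale_all N m sigma p A1 f1 X nu s t H1 ltac:(lra) Hs0 (proj1 Ht) (Hin t Ht))).
  assert (Hf2 : forall t, 0 < t < b -> ex_derive f2 t /\ ex_derive (fm m f2) t /\ ex_derive (Derive (fm m f2)) t).
  { intros t Ht. apply (sol_ex N m sigma p A2 f2 X); auto; lra. }
  assert (Hf2p : forall t, 0 < t < b -> 0 < f2 t).
  { intros t Ht. destruct H2 as [_ [Hp _]]. apply Hp. lra. }
  assert (E1 : Derive g c = Derive f2 c).
  { assert (Derive (fun t => g t - f2 t) c = 0).
    { apply (min_deriv0 _ 0 b c Hc).
      - intros x Hx. rewrite Heq. specialize (Hle x Hx). lra.
      - apply (ex_derive_minus g f2). apply (Hsc c Hc). apply (Hf2 c Hc). }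
    rewrite Derive_minus in H; [lra| apply (Hsc c Hc)| apply (Hf2 c Hc)]. }
  assert (Hmin2 : forall x, 0 < x < b -> fm m g c - fm m f2 c <= fm m g x - fm m f2 x).
  { intros x Hx. unfold fm. rewrite Heq. rewrite Rminus_diag.
    assert (Rpower (f2 x) m <= Rpower (g x) m).
    { apply Rle_Rpower_l; [destruct Hpar as [_ [? _]]; lra|]. split; [apply Hf2p; auto|apply Hle; auto]. }
    lra. }
  set (h := fun t => fm m g t - fm m f2 t).
  assert (Hhex : forall x, 0 < x < b -> ex_derive h x).
  { intros x Hx. apply (ex_derive_minus (fm m g) (fm m f2)). apply (Hsc x Hx). apply (Hf2 x Hx). }
  assert (E2 : Derive h c = 0) by (apply (min_deriv0 _ 0 b c Hc); [exact Hmin2| apply Hhex; auto]).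
  assert (Hloc : locally c (fun t => Derive h t = Derive (fm m g) t - Derive (fm m f2) t)).
  { apply locally_of. exists (Rmin c (b - c)). split; [apply Rmin_pos; lra|].
    intros y Hy. assert (Hy1 := Rlt_le_trans _ _ _ Hy (Rmin_l _ _)).
    assert (Hy2 := Rlt_le_trans _ _ _ Hy (Rmin_r _ _)).
    apply Rabs_def2 in Hy1. apply Rabs_def2 in Hy2. assert (Hy' : 0 < y < b) by lra.
    unfold h. apply Derive_minus. apply (Hsc y Hy'). apply (Hf2 y Hy'). }
  assert (Hd2 : is_derive (Derive h) c (Derive (Derive (fm m g)) c - Derive (Derive (fm m f2)) c)).
  { apply (is_derive_ext_loc (fun t => Derive (fm m g) t - Derive (fm m f2) t)).
    - apply (loc_imp _ _ _ Hloc). intros t Ht. symmetry. exact Ht.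
    - apply (is_derive_minus (Derive (fm m g)) (Derive (fm m f2))); apply Derive_correct.
      apply (Hsc c Hc). apply (Hf2 c Hc). }
  assert (Hge : 0 <= Derive (Derive h) c).
  { apply (min_deriv2 h 0 b c Hc); [exact Hmin2|exact Hhex|exact E2|eexists; exact Hd2]. }
  rewrite (is_derive_unique _ _ _ Hd2) in Hge.
  assert (E1' : Derive (fm m g) c = Derive (fm m f2) c).
  { unfold h in E2. rewrite Derive_minus in E2; [lra|apply (Hsc c Hc)|apply (Hf2 c Hc)]. }
  assert (Hr2 : ode_residual N m sigma p f2 c = 0).
  { destruct H2 as [_ [_ [_ [_ [_ [_ [_ Hr]]]]]]]. apply Hr. lra. }
  assert (Hr1 : ode_residual N m sigma p g c < 0).
  { apply (res_neg N m sigma p A1 f1 X nu c Hpar H1 Hnu); [lra| apply Hin; auto]. }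
  unfold ode_residual in Hr1, Hr2. rewrite Dn2 in Hr1, Hr2.
  rewrite E1, E1', Heq in Hr1. lra.
Qed.


Lemma isd_eq (f : R -> R) x l l' : is_derive f x l -> l = l' -> is_derive f x l'.
Proof. intros H ->; exact H. Qed.

Lemma D_deriv (U G : R -> R) n b x u' g' : is_derive U x u' -> is_derive G x g' ->
  is_derive (fun t => t ^ n * U t + b * t ^ (S n) * G t) x
   (INR n * x ^ pred n * U x + x ^ n * u' + b * (INR (S n) * x ^ n * G x + x ^ (S n) * g')).
Proof.
  intros HU Hg. eapply isd_eq.
  { apply (is_derive_plus (fun t => t ^ n * U t) (fun t => b * t ^ (S n) * G t)).
    apply (is_derive_mult (fun t => t ^ n) U). apply is_derive_pow. apply is_derive_id. exact HU. intros; apply Rmult_comm.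
    apply (is_derive_mult (fun t => b * t ^ (S n)) G). apply is_derive_scal. apply is_derive_pow. apply is_derive_id. exact Hg. intros; apply Rmult_comm. }
  unfold plus, mult, one. simpl.
  change (match n with 0%nat => 1 | S _ => INR n + 1 end) with (INR (S n)). ring.
Qed.

Lemma lim0_bound (h1 h2 : R -> R) : lim0 h2 ->
  (exists d, 0 < d /\ forall x, 0 < x < d -> Rabs (h1 x) <= Rabs (h2 x)) -> lim0 h1.
Proof.
  intros H [d0 [Hd0 Hb]] e He. destruct (H e He) as [d [Hd H']].
  exists (Rmin d d0). split; [apply Rmin_pos; lra|]. intros x Hx.
  assert (x < d) by (eapply Rlt_le_trans; [apply Hx|apply Rmin_l]).
  assert (x < d0) by (eapply Rlt_le_trans; [apply Hx|apply Rmin_r]).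
  eapply Rle_lt_trans; [apply Hb; lra|apply H'; lra].
Qed.

Lemma lim0_plus (h1 h2 : R -> R) : lim0 h1 -> lim0 h2 -> lim0 (fun x => h1 x + h2 x).
Proof.
  intros H1 H2 e He. destruct (H1 (e/2)) as [d1 [Hd1 H1']]; [lra|].
  destruct (H2 (e/2)) as [d2 [Hd2 H2']]; [lra|].
  exists (Rmin d1 d2). split; [apply Rmin_pos; lra|]. intros x Hx.
  assert (x < d1) by (eapply Rlt_le_trans; [apply Hx|apply Rmin_l]).
  assert (x < d2) by (eapply Rlt_le_trans; [apply Hx|apply Rmin_r]).
  eapply Rle_lt_trans; [apply Rabs_triang|].
  assert (Rabs (h1 x) < e/2) by (apply H1'; lra).
  assert (Rabs (h2 x) < e/2) by (apply H2'; lra). lra.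
Qed.

Lemma lim0_scal (h : R -> R) c : lim0 h -> lim0 (fun x => c * h x).
Proof.
  intros H e He. destruct (H (e / (Rabs c + 1))) as [d [Hd H']].
  { apply Rdiv_lt_0_compat; [lra|]. pose proof (Rabs_pos c); lra. }
  exists d. split; [lra|]. intros x Hx. rewrite Rabs_mult.
  pose proof (Rabs_pos c). specialize (H' x Hx).
  apply Rle_lt_trans with ((Rabs c + 1) * Rabs (h x)).
  - pose proof (Rabs_pos (h x)); nra.
  - replace e with ((Rabs c + 1) * (e / (Rabs c + 1))) by (field; lra).
    apply Rmult_lt_compat_l; lra.
Qed.

Lemma lim0_minus (h1 h2 : R -> R) : lim0 h1 -> lim0 h2 -> lim0 (fun x => h1 x - h2 x).
Proof.
  intros H1 H2. apply (lim0_bound _ (fun x => h1 x + (-1) * h2 x)).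
  - apply lim0_plus; auto. apply lim0_scal; auto.
  - exists 1. split; [lra|]. intros x _. right. f_equal. ring.
Qed.

Lemma lim0_id : lim0 (fun x => x).
Proof. intros e He. exists e. split; auto. intros x Hx. rewrite Rabs_right; lra. Qed.

Lemma lim0_of_lim (f : R -> R) l : filterlim f (at_right 0) (locally l) -> lim0 (fun x => f x - l).
Proof. intros H e He. apply (lim_r f l H e He). Qed.

Lemma rp_le_x x a : 0 < x <= 1 -> 1 <= a -> Rpower x a <= x.
Proof.
  intros Hx Ha. replace a with (1 + (a - 1)) by ring. rewrite Rpower_plus, Rpower_1 by lra.
  pose proof (rp_le1 x (a - 1) Hx ltac:(lra)). pose proof (rp_pos x (a - 1)). nra.
Qed.

Lemma lim0_rp a : 1 <= a -> lim0 (fun x => Rpower x a).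
Proof.
  intros Ha. apply (lim0_bound _ (fun x => x)). apply lim0_id.
  exists 1. split; [lra|]. intros x Hx. rewrite !Rabs_right.
  - apply rp_le_x; lra.
  - lra.
  - left; apply rp_pos.
Qed.

Lemma lim0_pow n : lim0 (fun x => x ^ (S n)).
Proof.
  apply (lim0_bound _ (fun x => x)). apply lim0_id.
  exists 1. split; [lra|]. intros x Hx. rewrite !Rabs_right.
  - simpl. assert (x ^ n <= 1) by (rewrite <- (pow1 n); apply pow_incr; lra).
    assert (0 <= x ^ n) by (apply pow_le; lra). nra.
  - lra.
  - left; apply pow_lt; lra.
Qed.


Lemma lim0_comp_lin (h : R -> R) s : lim0 h -> 0 < s -> lim0 (fun t => h (s * t)).
Proof.
  intros H Hs e He. destruct (H e He) as [d [Hd H']]. exists (d / s). split.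
  - apply Rdiv_lt_0_compat; lra.
  - intros x Hx. apply H'. split; [nra|]. destruct Hx as [_ Hx].
    apply (Rmult_lt_compat_l s) in Hx; [|lra]. replace (s * (d / s)) with d in Hx by (field; lra). lra.
Qed.

Lemma lim0_abs (h : R -> R) : lim0 h -> lim0 (fun x => Rabs (h x)).
Proof. intros H. apply (lim0_bound _ h H). exists 1. split; [lra|]. intros. rewrite Rabs_Rabsolu. lra. Qed.

Lemma pow_pred_id n t : t <> 0 -> INR n * t ^ pred n = t ^ n * (INR n / t).
Proof. intros Ht. destruct n; simpl. field; auto. field; auto. Qed.

Lemma rp_deriv a t : 0 < t -> is_derive (fun x => Rpower x a) t (a * Rpower t (a - 1)).
Proof. intros Ht. apply is_derive_Reals. apply derivable_pt_lim_power. exact Ht. Qed.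

Lemma rp_split t n a : 0 < t -> Rpower t (INR n + a) = t ^ n * Rpower t a.
Proof. intros Ht. rewrite Rpower_plus, Rpower_pow by lra. reflexivity. Qed.

Lemma pow_le1 t n : 0 < t <= 1 -> 0 < t ^ n <= 1.
Proof. intros Ht. split. apply pow_lt; lra. rewrite <- (pow1 n). apply pow_incr. lra. Qed.


Lemma zero_contra (n : nat) m sigma p A1 A2 f1 f2 X b :
  std_params (S n) m sigma p -> 0 < A1 -> A1 < A2 ->
  is_sol_on (S n) m sigma p A1 f1 X -> is_sol_on (S n) m sigma p A2 f2 X ->
  (forall x, 0 < x < X -> Derive f1 x < 0) -> (forall x, 0 < x < X -> Derive f2 x < 0) ->
  0 < b < X ->
  let lam := A2 / A1 in
  let K := Rpower lam ((m - 1) / 2) in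
  let s := / K in
  let g := fun t => lam * f1 (s * t) in
  (forall t, 0 < t <= b -> f2 t <= g t) -> False.
Proof.
  intros Hpar HA1 HA12 H1 H2 Hd1 Hd2 Hb lam K s g Hle.
  pose proof Hpar as [HN [Hm [Hsig Hp]]].
  assert (Hlam : 1 < lam) by (unfold lam; apply (Rmult_lt_reg_r A1); [lra|]; field_simplify; lra).
  assert (HA2 : A2 = lam * A1) by (unfold lam; field; lra).
  assert (HK : 1 < K) by (apply Kgt1; lra).
  assert (Hs0 : 0 < s) by (apply Rinv_0_lt_compat; lra).
  assert (Hs1 : s < 1) by (unfold s; rewrite <- Rinv_1; apply Rinv_lt_contravar; lra).
  assert (Hin : forall t, 0 < t <= b -> 0 < s * t < X /\ s * t < b) by (intros; split; [split|]; nra).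
  assert (Hsc : forall t, 0 < t <= b -> _) by (intros t Ht; exact (scale_all (S n) m sigma p A1 f1 X lam s t H1 ltac:(lra) Hs0 (proj1 Ht) (proj2 (proj1 (Hin t Ht))))).
  assert (Hf2 : forall t, 0 < t <= b -> ex_derive f2 t /\ ex_derive (fm m f2) t /\ ex_derive (Derive (fm m f2)) t).
  { intros t Ht. apply (sol_ex (S n) m sigma p A2 f2 X); auto; lra. }
  assert (Hf2b : forall t, 0 < t <= b -> f2 b <= f2 t).
  { intros t Ht. destruct (Req_dec t b) as [->|]; [lra|]. left. apply (sol_dec _ _ _ _ _ _ _ H2 Hd2); lra. }
  assert (Hf2A : forall t, 0 < t <= b -> f2 t <= A2).
  { intros t Ht. apply (sol_leA _ _ _ _ _ _ _ H2 Hd2). lra. }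
  assert (Hf2bp : 0 < f2 b) by (destruct H2 as [_ [Hp2 _]]; apply Hp2; lra).
  assert (Hf1b : forall t, 0 < t <= b -> f1 b < f1 (s * t)).
  { intros t Ht. destruct (Hin t Ht) as [[? ?] ?]. apply (sol_dec _ _ _ _ _ _ _ H1 Hd1); lra. }
  assert (Hf1bp : 0 < f1 b) by (destruct H1 as [_ [Hp1 _]]; apply Hp1; lra).
  assert (HgA : forall t, 0 < t <= b -> g t <= A2).
  { intros t Ht. unfold g. rewrite HA2. apply Rmult_le_compat_l; [lra|].
    apply (sol_leA _ _ _ _ _ _ _ H1 Hd1). destruct (Hin t Ht) as [[? ?] ?]. lra. }
  set (E := (m - 1) / 2 * sigma + p - 1).
  assert (HE : 1 < Rpower lam E).
  { rewrite <- (Rpower_O lam) at 1 by lra. apply Rpower_lt; [lra|].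
    unfold E. assert (0 < (m - 1) / 2 * sigma) by (apply Rmult_lt_0_compat; lra). lra. }
  set (c0 := lam * Rpower s sigma * Rpower (f1 b) p * (Rpower lam E - 1)).
  assert (Hc0 : 0 < c0).
  { unfold c0. apply Rmult_lt_0_compat; [|lra]. apply Rmult_lt_0_compat; [apply Rmult_lt_0_compat; [lra|apply rp_pos]|apply rp_pos]. }
  assert (Hres_g : forall t, 0 < t <= b -> ode_residual (S n) m sigma p g t <= - c0 * Rpower t sigma).
  { intros t Ht. destruct (Hin t Ht) as [[? ?] ?].
    pose proof (res_scale (S n) m sigma p A1 f1 X lam t H1 ltac:(lra) ltac:(lra) ltac:(assumption)) as R.
    fold K s g E in R. rewrite R.
    rewrite <- Rpower_mult_distr by lra.
    assert (Rpower (f1 b) p <= Rpower (f1 (s * t)) p).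
    { apply Rle_Rpower_l; [lra|]. split; [lra|]. left; apply Hf1b; auto. }
    unfold c0. pose proof (rp_pos s sigma). pose proof (rp_pos t sigma). pose proof (rp_pos (f1 b) p).
    assert (0 < Rpower s sigma * Rpower t sigma) by (apply Rmult_lt_0_compat; lra).
    assert (0 < lam * (Rpower s sigma * Rpower t sigma)) by (apply Rmult_lt_0_compat; lra).
    assert (lam * (Rpower s sigma * Rpower t sigma) * Rpower (f1 b) p * (Rpower lam E - 1) <=
            lam * (Rpower s sigma * Rpower t sigma) * Rpower (f1 (s * t)) p * (Rpower lam E - 1)).
    { apply Rmult_le_compat_r; [lra|]. apply Rmult_le_compat_l; lra. }
    nra. }
  assert (Hbeta : 0 < beta m sigma p).
  { unfold beta, Lpar. apply Rdiv_lt_0_compat; [lra|]. nra. }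
  set (U := fun t => Derive (fm m g) t - Derive (fm m f2) t).
  set (G := fun t => g t - f2 t).
  set (w := fun t => fm m g t - fm m f2 t).
  set (D := fun t => t ^ n * U t + beta m sigma p * t ^ (S n) * G t).
  assert (HU' : forall t, 0 < t <= b -> is_derive U t (Derive (Derive (fm m g)) t - Derive (Derive (fm m f2)) t)).
  { intros t Ht. apply (is_derive_minus (Derive (fm m g)) (Derive (fm m f2))); apply Derive_correct.
    apply (Hsc t Ht). apply (Hf2 t Ht). }
  assert (HG' : forall t, 0 < t <= b -> is_derive G t (Derive g t - Derive f2 t)).
  { intros t Ht. apply (is_derive_minus g f2); apply Derive_correct.
    apply (Hsc t Ht). apply (Hf2 t Ht). }
  assert (Hw' : forall t, 0 < t <= b -> is_derive w t (U t)).
  { intros t Ht. apply (is_derive_minus (fm m g) (fm m f2)); apply Derive_correct.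
    apply (Hsc t Ht). apply (Hf2 t Ht). }
  set (br := fun t => ode_residual (S n) m sigma p g t - ode_residual (S n) m sigma p f2 t
      + Rpower t sigma * (Rpower (g t) p - Rpower (f2 t) p) + (INR (S n) * beta m sigma p - alpha m sigma p) * G t).
  assert (HD' : forall t, 0 < t <= b -> is_derive D t (t ^ n * br t)).
  { intros t Ht. eapply isd_eq. apply D_deriv; [apply HU'; auto|apply HG'; auto].
    unfold br, ode_residual. rewrite !Dn2. rewrite pow_pred_id by lra. rewrite S_INR.
    unfold U, G. match goal with |- ?a = ?b => change (@eq R a b) end. change (t ^ S n) with (t * t ^ n). field. lra. }
  set (Q := m * Rpower (f2 b) (m - 1)).
  assert (HQ : 0 < Q) by (unfold Q; apply Rmult_lt_0_compat; [lra|apply rp_pos]).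
  set (PR := p * Rpower A2 (p - 1) + Rabs (INR (S n) * beta m sigma p - alpha m sigma p)).
  assert (HPR : 0 <= PR) by (unfold PR; pose proof (rp_pos A2 (p-1)); pose proof (Rabs_pos (INR (S n) * beta m sigma p - alpha m sigma p)); nra).
  set (C := PR / Q).
  assert (HC : 0 <= C) by (unfold C; apply Rdiv_le_0_compat; lra).
  assert (Hw0 : forall t, 0 < t <= b -> 0 <= G t /\ Q * G t <= w t).
  { intros t Ht. assert (Hf2t : 0 < f2 t) by (specialize (Hf2b t Ht); lra).
    assert (Hg2 := Hle t Ht). split. unfold G; lra.
    pose proof (rp_lower m (g t) (f2 t) ltac:(lra) ltac:(lra)) as Hl.
    assert (Rpower (f2 b) (m - 1) <= Rpower (f2 t) (m - 1)) by (apply Rle_Rpower_l; [lra|split; [lra|apply Hf2b; auto]]).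
    assert (0 <= m * (Rpower (f2 t) (m - 1) - Rpower (f2 b) (m - 1)) * (g t - f2 t)).
    { apply Rmult_le_pos; [apply Rmult_le_pos|]; lra. }
    unfold Q, G, w, fm. nra. }
  assert (Hbr : forall t M, 0 < t <= b -> t <= 1 -> w t <= M -> br t <= C * M - c0 * Rpower t sigma).
  { intros t M Ht Ht1 HM.
    assert (Hr2 : ode_residual (S n) m sigma p f2 t = 0).
    { destruct H2 as [_ [_ [_ [_ [_ [_ [_ Hr]]]]]]]. apply Hr. lra. }
    assert (Hf2t : 0 < f2 t) by (specialize (Hf2b t Ht); lra).
    assert (Hg2 := Hle t Ht). assert (HgA2 := HgA t Ht).
    destruct (Hw0 t Ht) as [HG0 HQG].
    pose proof (rp_upper p (g t) (f2 t) ltac:(lra) ltac:(lra)) as Hu.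
    assert (Rpower (g t) (p - 1) <= Rpower A2 (p - 1)) by (apply Rle_Rpower_l; lra).
    assert (Rpower (f2 t) p <= Rpower (g t) p) by (apply Rle_Rpower_l; lra).
    assert (Hts : 0 < Rpower t sigma <= 1) by (split; [apply rp_pos|apply rp_le1; lra]).
    assert (H3 : Rpower t sigma * (Rpower (g t) p - Rpower (f2 t) p) <= p * Rpower A2 (p - 1) * G t).
    { unfold G. assert (Rpower t sigma * (Rpower (g t) p - Rpower (f2 t) p) <= Rpower (g t) p - Rpower (f2 t) p) by nra.
      assert (p * Rpower (g t) (p - 1) * (g t - f2 t) <= p * Rpower A2 (p - 1) * (g t - f2 t)).
      { apply Rmult_le_compat_r; [lra|]. apply Rmult_le_compat_l; lra. }
      lra. }
    assert (H4 : (INR (S n) * beta m sigma p - alpha m sigma p) * G t <=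
                 Rabs (INR (S n) * beta m sigma p - alpha m sigma p) * G t).
    { apply Rmult_le_compat_r; [lra|apply Rle_abs]. }
    assert (H5 : PR * G t <= C * M).
    { unfold C. apply (Rmult_le_reg_l Q); [lra|]. field_simplify; [|lra].
      assert (Q * G t <= M) by lra. nra. }
    assert (H6 := Hres_g t Ht).
    unfold br. rewrite Hr2. unfold PR in H5. lra. }
  assert (Hlf2 : lim0 (fun t => f2 t - A2)).
  { apply lim0_of_lim. destruct H2 as [_ [_ [Hl _]]]. exact Hl. }
  assert (Hlf1 : lim0 (fun t => f1 t - A1)).
  { apply lim0_of_lim. destruct H1 as [_ [_ [Hl _]]]. exact Hl. }
  assert (Hlg : lim0 (fun t => g t - A2)).
  { apply (lim0_bound _ (fun t => lam * (f1 (s * t) - A1))).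
    - apply lim0_scal. apply (lim0_comp_lin (fun t => f1 t - A1)); auto.
    - exists 1. split; [lra|]. intros x _. right. f_equal. unfold g. rewrite HA2. ring. }
  assert (HlG : lim0 G).
  { apply (lim0_bound _ (fun t => (g t - A2) - (f2 t - A2))).
    - apply lim0_minus; auto.
    - exists 1. split; [lra|]. intros x _. right. f_equal. unfold G. ring. }
  assert (Hlu : forall (f : R -> R) A, is_sol_on (S n) m sigma p A f X -> lim0 (Derive (fm m f))).
  { intros f A Hf. apply (lim0_bound _ (fun t => Derive (fm m f) t - 0)).
    - apply lim0_of_lim. destruct Hf as [_ [_ [_ [_ [_ [Hl _]]]]]]. exact Hl.
    - exists 1. split; [lra|]. intros x _. rewrite Rminus_0_r. lra. }
  assert (Hlug : lim0 (Derive (fm m g))).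
  { apply (lim0_bound _ (fun t => (Rpower lam m * s) * Derive (fm m f1) (s * t))).
    - apply lim0_scal. apply (lim0_comp_lin (Derive (fm m f1))); auto. apply (Hlu f1 A1 H1).
    - exists b. split; [lra|]. intros x Hx. right. f_equal.
      destruct (Hsc x ltac:(lra)) as [_ [[_ E2] _]]. etransitivity; [apply E2|ring]. }
  assert (HlU : lim0 U).
  { apply lim0_minus; auto. apply (Hlu f2 A2 H2). }
  assert (HlD : lim0 D).
  { apply (lim0_bound _ (fun t => Rabs (U t) + beta m sigma p * Rabs (G t))).
    - apply lim0_plus. apply lim0_abs; auto. apply lim0_scal. apply lim0_abs; auto.
    - exists 1. split; [lra|]. intros x Hx. unfold D.
      pose proof (pow_le1 x n ltac:(lra)). pose proof (pow_le1 x (S n) ltac:(lra)).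
      pose proof (Rabs_pos (U x)). pose proof (Rabs_pos (G x)).
      rewrite (Rabs_right (Rabs (U x) + _)) by nra.
      eapply Rle_trans; [apply Rabs_triang|]. rewrite !Rabs_mult.
      rewrite (Rabs_right (x ^ n)) by lra. rewrite (Rabs_right (x ^ S n)) by lra.
      rewrite (Rabs_right (beta m sigma p)) by lra.
      assert (x ^ n * Rabs (U x) <= Rabs (U x)) by nra.
      assert (x ^ S n * Rabs (G x) <= Rabs (G x)) by nra.
      assert (beta m sigma p * x ^ S n * Rabs (G x) <= beta m sigma p * Rabs (G x)) by nra.
      lra. }
  assert (Hlw : lim0 w).
  { apply (lim0_bound _ (fun t => (m * Rpower A2 (m - 1)) * G t)).
    - apply lim0_scal. auto.
    - exists b. split; [lra|]. intros x Hx. assert (Hx' : 0 < x <= b) by lra.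
      destruct (Hw0 x Hx') as [HG0 HQG].
      assert (Hf2t : 0 < f2 x) by (specialize (Hf2b x Hx'); lra).
      assert (Hg2 := Hle x Hx'). assert (HgA2 := HgA x Hx').
      pose proof (rp_upper m (g x) (f2 x) ltac:(lra) ltac:(lra)) as Hu.
      assert (Rpower (g x) (m - 1) <= Rpower A2 (m - 1)) by (apply Rle_Rpower_l; lra).
      assert (0 <= w x) by (assert (0 <= Q * G x) by (apply Rmult_le_pos; lra); lra).
      assert (w x <= m * Rpower A2 (m - 1) * G x).
      { unfold w, fm, G. eapply Rle_trans; [exact Hu|].
        apply Rmult_le_compat_r; [unfold G in HG0; lra|]. apply Rmult_le_compat_l; lra. }
      rewrite !Rabs_right; lra. }
  set (Nn := INR (S n)).
  assert (HNn : 1 <= Nn) by (unfold Nn; rewrite S_INR; pose proof (pos_INR n); lra).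
  set (eps := Rmin 1 (Rmin b (Nn / (C + 1)))).
  assert (He1 : eps <= 1) by apply Rmin_l.
  assert (He2 : eps <= b) by (eapply Rle_trans; [apply Rmin_r|apply Rmin_l]).
  assert (He3 : eps <= Nn / (C + 1)) by (eapply Rle_trans; [apply Rmin_r|apply Rmin_r]).
  assert (He0 : 0 < eps) by (apply Rmin_pos; [lra|apply Rmin_pos; [lra|apply Rdiv_lt_0_compat; lra]]).
  assert (HCe : forall t, 0 < t <= eps -> C * (t * t) <= Nn).
  { intros t Ht. assert (C * t <= Nn).
    { apply Rle_trans with (C * (Nn / (C + 1))). apply Rmult_le_compat_l; lra.
      apply (Rmult_le_reg_l (C + 1)); [lra|]. field_simplify; nra. }
    nra. }
  set (c1 := c0 / ((Nn + sigma) * (2 + sigma))).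
  assert (Hc1 : 0 < c1) by (unfold c1; apply Rdiv_lt_0_compat; [lra|]; nra).
  assert (Hstep : forall M, 0 <= M -> (forall t, 0 < t <= eps -> w t <= M) ->
            forall t, 0 < t <= eps -> w t <= M / 2 - c1 * Rpower t (2 + sigma)).
  { intros M HM HwM.
    set (P1 := fun t => (C * M / Nn) * t ^ (S n) - (c0 / (Nn + sigma)) * Rpower t (Nn + sigma)).
    assert (HP1 : forall t, 0 < t <= eps -> is_derive P1 t (t ^ n * (C * M - c0 * Rpower t sigma))).
    { intros t Ht. eapply isd_eq.
      - apply (is_derive_minus (fun t => (C * M / Nn) * t ^ (S n)) (fun t => (c0 / (Nn + sigma)) * Rpower t (Nn + sigma))).
        apply is_derive_scal. apply is_derive_pow. apply is_derive_id.
        apply is_derive_scal. apply rp_deriv. lra.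
      - replace (Nn + sigma - 1) with (INR n + sigma) by (unfold Nn; rewrite S_INR; ring).
        rewrite rp_split by lra. unfold minus, plus, opp, mult, one. simpl.
        match goal with |- ?a = ?b => change (@eq R a b) end.
        change (match n with 0%nat => 1 | S _ => INR n + 1 end) with Nn. field. lra. }
    assert (HDle : forall t, 0 < t <= eps -> D t <= P1 t).
    { apply (cmp0 D P1 (fun t => t ^ n * br t) (fun t => t ^ n * (C * M - c0 * Rpower t sigma)) eps).
      - intros t Ht. apply HD'. lra.
      - exact HP1.
      - intros t Ht. apply Rmult_le_compat_l. apply pow_le; lra. apply Hbr; try lra. apply HwM; auto.
      - apply lim0_minus; auto. unfold P1. apply lim0_minus; apply lim0_scal.
        apply lim0_pow. apply lim0_rp. lra. }
    assert (HUle : forall t, 0 < t <= eps ->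
              U t <= (C * M / Nn) * t - (c0 / (Nn + sigma)) * Rpower t (1 + sigma)).
    { intros t Ht. assert (Htn : 0 < t ^ n) by (apply pow_lt; lra).
      apply (Rmult_le_reg_l (t ^ n)); [lra|].
      assert (HD := HDle t Ht). unfold D, P1 in HD.
      destruct (Hw0 t ltac:(lra)) as [HG0 _].
      assert (0 <= beta m sigma p * t ^ S n * G t).
      { apply Rmult_le_pos; [apply Rmult_le_pos; [lra|apply pow_le; lra]|lra]. }
      replace (Nn + sigma) with (INR n + (1 + sigma)) in HD by (unfold Nn; rewrite S_INR; ring).
      rewrite rp_split in HD by lra.
      replace (INR n + (1 + sigma)) with (Nn + sigma) in HD by (unfold Nn; rewrite S_INR; ring).
      change (t ^ S n) with (t * t ^ n) in HD, H.
      nra. }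
    set (P2 := fun t => (C * M / (2 * Nn)) * t ^ 2 - c1 * Rpower t (2 + sigma)).
    assert (HP2 : forall t, 0 < t <= eps ->
              is_derive P2 t ((C * M / Nn) * t - (c0 / (Nn + sigma)) * Rpower t (1 + sigma))).
    { intros t Ht. eapply isd_eq.
      - apply (is_derive_minus (fun t => (C * M / (2 * Nn)) * t ^ 2) (fun t => c1 * Rpower t (2 + sigma))).
        apply is_derive_scal. apply is_derive_pow. apply is_derive_id.
        apply is_derive_scal. apply rp_deriv. lra.
      - replace (2 + sigma - 1) with (1 + sigma) by ring.
        unfold minus, plus, opp, mult, one, c1. simpl.
        match goal with |- ?a = ?b => change (@eq R a b) end. field. lra. }
    assert (Hwle : forall t, 0 < t <= eps -> w t <= P2 t).
    { apply (cmp0 w P2 U (fun t => (C * M / Nn) * t - (c0 / (Nn + sigma)) * Rpower t (1 + sigma)) eps).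
      - intros t Ht. apply Hw'. lra.
      - exact HP2.
      - exact HUle.
      - apply lim0_minus; auto. unfold P2. apply lim0_minus; apply lim0_scal.
        apply lim0_pow. apply lim0_rp. lra. }
    intros t Ht. eapply Rle_trans; [apply Hwle; auto|]. unfold P2.
    assert (C * M / (2 * Nn) * t ^ 2 <= M / 2).
    { simpl. rewrite Rmult_1_r. assert (HC2 := HCe t Ht).
      apply (Rmult_le_reg_l (2 * Nn)); [lra|]. field_simplify; [|lra]. nra. }
    lra. }
  set (M0 := Rpower A2 m).
  assert (HM0 : 0 < M0) by apply rp_pos.
  assert (Hit : forall k, forall t, 0 < t <= eps -> w t <= M0 * (/ 2) ^ k).
  { induction k as [|k IH]; intros t Ht.
    - simpl. rewrite Rmult_1_r. unfold w, fm, M0.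
      assert (Rpower (g t) m <= Rpower A2 m).
      { apply Rle_Rpower_l; [lra|]. split; [|apply HgA; lra].
        assert (f2 b <= f2 t) by (apply Hf2b; lra). assert (f2 t <= g t) by (apply Hle; lra). lra. }
      pose proof (rp_pos (f2 t) m). lra.
    - assert (0 <= M0 * (/ 2) ^ k) by (apply Rmult_le_pos; [lra|apply pow_le; lra]).
      pose proof (Hstep (M0 * (/ 2) ^ k) H IH t Ht).
      pose proof (rp_pos t (2 + sigma)).
      simpl. assert (0 <= c1 * Rpower t (2 + sigma)) by (apply Rmult_le_pos; lra). lra. }
  assert (Hy : 0 < 2 * c1 * Rpower eps (2 + sigma) / M0).
  { apply Rdiv_lt_0_compat; [|lra]. pose proof (rp_pos eps (2 + sigma)). nra. }
  destruct (pow_lt_1_zero (/ 2) ltac:(rewrite Rabs_right; lra) _ Hy) as [k Hk].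
  specialize (Hk k (Nat.le_refl k)).
  assert (Hpk : 0 <= (/ 2) ^ k) by (apply pow_le; lra).
  rewrite Rabs_right in Hk by lra.
  assert (HM : 0 <= M0 * (/ 2) ^ k) by (apply Rmult_le_pos; lra).
  pose proof (Hstep _ HM (Hit k) eps ltac:(lra)) as Hf.
  assert (M0 * (/ 2) ^ k < 2 * c1 * Rpower eps (2 + sigma)).
  { apply (Rmult_lt_compat_l M0) in Hk; [|lra]. replace (M0 * (2 * c1 * Rpower eps (2 + sigma) / M0)) with (2 * c1 * Rpower eps (2 + sigma)) in Hk by (field; lra). lra. }
  destruct (Hw0 eps ltac:(lra)) as [HG0 HQG].
  assert (0 <= Q * G eps) by (apply Rmult_le_pos; lra).
  lra.
Qed.


Lemma f_noninc (N : nat) m sigma p A f X : is_sol_on N m sigma p A f X ->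
  (forall x, 0 < x < X -> Derive f x < 0) ->
  forall x y, 0 <= x -> x <= y -> y < X -> f y <= f x.
Proof.
  intros Hs Hd x y Hx Hxy Hy.
  destruct (Req_dec x y) as [->|Hne]; [lra|].
  destruct (Req_dec x 0) as [->|Hx0].
  - assert (H0 : f 0 = A) by apply Hs. rewrite H0. apply (sol_leA N m sigma p A f X Hs Hd). lra.
  - left. apply (sol_dec N m sigma p A f X Hs Hd); lra.
Qed.

Lemma f_pos0 (N : nat) m sigma p A f X : is_sol_on N m sigma p A f X ->
  forall x, 0 <= x < X -> 0 < f x.
Proof. intros [_ [Hp _]] x Hx. apply Hp. exact Hx. Qed.

Lemma cont_ext (N : nat) m sigma p A f X : is_sol_on N m sigma p A f X ->
  forall x, 0 <= x < X -> continuity_pt (fun y => f (Rmax 0 y)) x.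
Proof.
  intros Hs x Hx. apply cont_of. intros e He.
  destruct (Req_dec x 0) as [->|Hx0].
  - destruct Hs as [H0 [_ [Hl _]]].
    destruct (lim_r f A Hl e He) as [d [Hd Hd']].
    exists d. split; [lra|]. intros y Hy. rewrite Rminus_0_r in Hy.
    rewrite (Rmax_left 0 0) by lra. rewrite H0.
    destruct (Rle_or_lt y 0) as [Hy0|Hy0].
    + rewrite Rmax_left by lra. rewrite H0, Rminus_diag, Rabs_R0. lra.
    + rewrite Rmax_right by lra. apply Hd'. split; [lra|]. apply Rabs_def2 in Hy. lra.
  - assert (Hx' : 0 < x < X) by lra.
    destruct (sol_ex N m sigma p A f X x Hs Hx') as [Hex _].
    destruct (cont_eps f x (cont_of_ex f x Hex) e He) as [d [Hd Hd']].
    exists (Rmin d x). split; [apply Rmin_pos; lra|]. intros y Hy.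
    assert (Hy1 := Rlt_le_trans _ _ _ Hy (Rmin_l _ _)).
    assert (Hy2 := Rlt_le_trans _ _ _ Hy (Rmin_r _ _)).
    apply Rabs_def2 in Hy2.
    rewrite (Rmax_right 0 y) by lra. rewrite (Rmax_right 0 x) by lra. apply Hd'. exact Hy1.
Qed.

Lemma s_cont k nu : 0 < nu -> continuity_pt (fun v => / Rpower v k) nu.
Proof.
  intros Hnu. apply (cont_of_ex (fun v => / Rpower v k) nu).
  exists ((- k) * Rpower nu (- k - 1)).
  apply (is_derive_ext (fun v => Rpower v (- k))).
  - intros t. rewrite Rpower_Ropp. reflexivity.
  - apply rp_deriv. exact Hnu.
Qed.


Theorem lemma4p3 (N : nat) (m sigma p A1 A2 Xi : R) (f1 f2 : R -> R) :
  std_params N m sigma p ->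
  0 < A1 -> A1 < A2 -> 0 < Xi ->
  is_sol_on N m sigma p A1 f1 Xi ->
  is_sol_on N m sigma p A2 f2 Xi ->
  (forall xi, 0 < xi < Xi ->
     0 < f1 xi /\ Derive f1 xi < 0 /\ Derive f2 xi < 0) ->
  forall xi, 0 < xi < Xi -> f1 xi < f2 xi.
Proof.
  intros Hpar HA1 HA12 HXi H1 H2 Hder xi Hxi.
  assert (Hd1 : forall x, 0 < x < Xi -> Derive f1 x < 0) by (intros x Hx; apply (Hder x Hx)).
  assert (Hd2 : forall x, 0 < x < Xi -> Derive f2 x < 0) by (intros x Hx; apply (Hder x Hx)).
  destruct (Rlt_or_le (f1 xi) (f2 xi)) as [|Hc]; [assumption|exfalso].
  destruct N as [|n]; [destruct Hpar as [HN _]; lia|].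
  set (b := xi) in *.
  pose proof Hpar as [HN [Hm [Hsig Hp]]].
  set (k := (m - 1) / 2).
  assert (Hk : 0 < k) by (unfold k; lra).
  set (sf := fun v => / Rpower v k).
  set (f1e := fun y => f1 (Rmax 0 y)).
  set (f2e := fun y => f2 (Rmax 0 y)).
  set (Gf := fun v x => v * f1e (sf v * x)).
  set (Good := fun v => forall x, 0 <= x <= b -> f2e x < Gf v x).
  assert (HRk : forall v, 1 <= v -> 1 <= Rpower v k).
  { intros v Hv. rewrite <- (Rpower_O v) at 1 by lra. apply Rle_Rpower; lra. }
  assert (Hsf : forall v, 1 <= v -> 0 < sf v <= 1).
  { intros v Hv. unfold sf. specialize (HRk v Hv). split. apply Rinv_0_lt_compat; lra.
    rewrite <- Rinv_1. apply Rinv_le_contravar; lra. }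
  assert (Hsf_mono : forall v v', 1 <= v <= v' -> sf v' <= sf v).
  { intros v v' Hv. unfold sf. apply Rinv_le_contravar. specialize (HRk v ltac:(lra)); lra.
    apply Rle_Rpower_l; [lra|]. split; lra. }
  assert (Hsf1 : forall v, 1 < v -> sf v < 1).
  { intros v Hv. unfold sf. rewrite <- Rinv_1. apply Rinv_lt_contravar; [|apply Kgt1; lra].
    pose proof (Kgt1 m v Hm Hv). fold k in H. lra. }
  assert (Hf1e : forall y, 0 <= y -> f1e y = f1 y) by (intros; unfold f1e; rewrite Rmax_right; auto).
  assert (Hf2e : forall y, 0 <= y -> f2e y = f2 y) by (intros; unfold f2e; rewrite Rmax_right; auto).
  assert (Hf1ni : forall x y, 0 <= x -> x <= y -> y <= b -> f1 y <= f1 x).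
  { intros. apply (f_noninc _ _ _ _ _ _ _ H1 Hd1); lra. }
  assert (Hf1pos : forall y, 0 <= y <= b -> 0 < f1 y) by (intros; apply (f_pos0 _ _ _ _ _ _ _ H1); lra).
  assert (Hf2pos : forall y, 0 <= y <= b -> 0 < f2 y) by (intros; apply (f_pos0 _ _ _ _ _ _ _ H2); lra).
  assert (Hf1A : forall y, 0 <= y <= b -> f1 y <= A1) by (intros; apply (sol_leA _ _ _ _ _ _ _ H1 Hd1); lra).
  assert (Hf2A : forall y, 0 <= y <= b -> f2 y <= A2) by (intros; apply (sol_leA _ _ _ _ _ _ _ H2 Hd2); lra).
  assert (Hf1b : f1 b < A1) by (apply (sol_ltA _ _ _ _ _ _ _ H1 Hd1); lra).
  assert (Hf1bp : 0 < f1 b) by (apply Hf1pos; lra).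
  assert (Harg : forall v x, 1 <= v -> 0 <= x <= b -> 0 <= sf v * x <= x).
  { intros v x Hv Hx. specialize (Hsf v Hv). split; nra. }
  assert (HGf : forall v x, 1 <= v -> 0 <= x <= b -> Gf v x = v * f1 (sf v * x)).
  { intros v x Hv Hx. unfold Gf. rewrite Hf1e; auto. apply Harg; auto. }
  assert (Hmono : forall v v' x, 1 <= v <= v' -> 0 <= x <= b -> Gf v x <= Gf v' x).
  { intros v v' x Hv Hx. rewrite !HGf by (auto; lra).
    destruct (Harg v x ltac:(lra) Hx). destruct (Harg v' x ltac:(lra) Hx).
    assert (sf v' * x <= sf v * x) by (apply Rmult_le_compat_r; [lra|apply Hsf_mono; lra]).
    assert (f1 (sf v * x) <= f1 (sf v' * x)) by (apply Hf1ni; lra).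
    assert (0 < f1 (sf v * x)) by (apply Hf1pos; lra).
    nra. }
  assert (HGood_mono : forall v v', 1 <= v <= v' -> Good v -> Good v').
  { intros v v' Hv HG x Hx. eapply Rlt_le_trans; [apply HG; auto|apply Hmono; auto]. }
  set (lam := A2 / A1).
  assert (Hlam : 1 < lam) by (unfold lam; apply (Rmult_lt_reg_r A1); [lra|]; field_simplify; lra).
  assert (HA2 : A2 = lam * A1) by (unfold lam; field; lra).
  assert (H0f1 : f1 0 = A1) by apply H1.
  assert (H0f2 : f2 0 = A2) by apply H2.
  assert (HGf0 : forall v, 1 <= v -> Gf v 0 = v * A1).
  { intros v Hv. rewrite HGf by (auto; lra). rewrite Rmult_0_r. rewrite H0f1. reflexivity. }
  set (nu0 := A2 / f1 b + 1).
  assert (Hnu0 : lam < nu0).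
  { unfold nu0, lam. assert (A2 / A1 < A2 / f1 b).
    { apply Rmult_lt_compat_l; [lra|]. apply Rinv_lt_contravar; nra. }
    lra. }
  assert (HGood0 : Good nu0).
  { intros x Hx. rewrite HGf by (auto; lra). rewrite Hf2e by lra.
    destruct (Harg nu0 x ltac:(lra) Hx).
    assert (f1 b <= f1 (sf nu0 * x)) by (apply Hf1ni; lra).
    assert (A2 < nu0 * f1 b).
    { unfold nu0. rewrite Rmult_plus_distr_r. field_simplify; lra. }
    assert (f2 x <= A2) by (apply Hf2A; lra). nra. }
  assert (HUf : uniform_continuity f1e (fun c => 0 <= c <= b)).
  { apply Heine. apply compact_P3. intros x Hx. apply (cont_ext _ _ _ _ _ _ _ H1). lra. }
  assert (HUs : uniform_continuity sf (fun c => 1 <= c <= nu0 + 1)).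
  { apply Heine. apply compact_P3. intros x Hx. apply s_cont. lra. }
  assert (HUC : forall e, 0 < e -> exists r, 0 < r /\ forall v v', 1 <= v <= nu0 + 1 -> 1 <= v' <= nu0 + 1 ->
             Rabs (v - v') < r -> forall x, 0 <= x <= b -> Rabs (Gf v x - Gf v' x) < e).
  { intros e He.
    destruct (HUf (mkposreal (e / (2 * (nu0 + 1))) ltac:(apply Rdiv_lt_0_compat; lra))) as [d1 Hd1'].
    destruct (HUs (mkposreal (d1 / (b + 1)) ltac:(apply Rdiv_lt_0_compat; [apply cond_pos|lra]))) as [d2 Hd2'].
    simpl in *.
    exists (Rmin d2 (e / (2 * (A1 + 1)))). split.
    { apply Rmin_pos; [apply cond_pos|apply Rdiv_lt_0_compat; lra]. }
    intros v v' Hv Hv' Hvv x Hx.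
    assert (Hr1 := Rlt_le_trans _ _ _ Hvv (Rmin_l _ _)).
    assert (Hr2 := Rlt_le_trans _ _ _ Hvv (Rmin_r _ _)).
    assert (Hs12 : Rabs (sf v - sf v') < d1 / (b + 1)) by (apply Hd2'; auto).
    destruct (Harg v x ltac:(lra) Hx). destruct (Harg v' x ltac:(lra) Hx).
    assert (Hsx : Rabs (sf v * x - sf v' * x) < d1).
    { replace (sf v * x - sf v' * x) with ((sf v - sf v') * x) by ring.
      rewrite Rabs_mult, (Rabs_right x) by lra.
      pose proof (Rabs_pos (sf v - sf v')). pose proof (cond_pos d1).
      apply Rle_lt_trans with (Rabs (sf v - sf v') * (b + 1)); [nra|].
      apply (Rmult_lt_compat_r (b + 1)) in Hs12; [|lra].
      replace (d1 / (b + 1) * (b + 1)) with (pos d1) in Hs12 by (field; lra). lra. }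
    assert (Hf : Rabs (f1e (sf v * x) - f1e (sf v' * x)) < e / (2 * (nu0 + 1))).
    { apply Hd1'; auto; lra. }
    unfold Gf.
    replace (v * f1e (sf v * x) - v' * f1e (sf v' * x)) with
      ((v - v') * f1e (sf v * x) + v' * (f1e (sf v * x) - f1e (sf v' * x))) by ring.
    eapply Rle_lt_trans; [apply Rabs_triang|]. rewrite !Rabs_mult.
    rewrite (Rabs_right v') by lra.
    assert (Hfe : Rabs (f1e (sf v * x)) <= A1).
    { rewrite Hf1e by lra. rewrite Rabs_right. apply Hf1A; lra. left; apply Hf1pos; lra. }
    assert (T1 : Rabs (v - v') * Rabs (f1e (sf v * x)) <= e / (2 * (A1 + 1)) * A1).
    { apply Rmult_le_compat; try apply Rabs_pos; lra. }
    assert (T2 : v' * Rabs (f1e (sf v * x) - f1e (sf v' * x)) <= (nu0 + 1) * (e / (2 * (nu0 + 1)))).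
    { apply Rmult_le_compat; try lra. apply Rabs_pos. }
    assert (e / (2 * (A1 + 1)) * A1 < e / 2).
    { apply (Rmult_lt_reg_l (2 * (A1 + 1))); [lra|]. field_simplify; nra. }
    assert ((nu0 + 1) * (e / (2 * (nu0 + 1))) = e / 2) by (field; lra).
    lra. }
  set (SS := fun v => lam <= v <= nu0 /\ ~ Good v).
  assert (HlamS : SS lam).
  { split; [lra|]. intros HG. specialize (HG 0 ltac:(lra)).
    rewrite HGf0 in HG by lra. unfold f2e in HG. rewrite Rmax_left in HG by lra.
    rewrite H0f2 in HG. lra. }
  destruct (completeness SS) as [nus [Hub Hlub]].
  { exists nu0. intros v Hv. apply Hv. }
  { exists lam. exact HlamS. }
  assert (Hn1 : lam <= nus) by (apply Hub; exact HlamS).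
  assert (Hn2 : nus <= nu0) by (apply Hlub; intros v Hv; apply Hv).
  assert (Ha : forall v, nus < v -> v <= nu0 + 1 -> Good v).
  { intros v Hv Hv'. destruct (Rle_or_lt v nu0) as [Hv0|Hv0].
    - destruct (classic (Good v)) as [|HnG]; [assumption|].
      exfalso. assert (v <= nus) by (apply Hub; split; [lra|auto]). lra.
    - apply (HGood_mono nu0); [lra|exact HGood0]. }
  assert (Hb : forall x, 0 <= x <= b -> f2e x <= Gf nus x).
  { intros x Hx. destruct (Rle_or_lt (f2e x) (Gf nus x)) as [|Hlt]; [assumption|exfalso].
    destruct (HUC (f2e x - Gf nus x) ltac:(lra)) as [r [Hr Hr']].
    set (v := nus + Rmin (r / 2) (1 / 2)).
    assert (Hv1 : 0 < Rmin (r / 2) (1 / 2)) by (apply Rmin_pos; lra).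
    assert (Hv2 : Rmin (r / 2) (1 / 2) <= r / 2) by apply Rmin_r || apply Rmin_l.
    assert (Hv3 : Rmin (r / 2) (1 / 2) <= 1 / 2) by apply Rmin_r.
    assert (HGv := Ha v ltac:(unfold v; lra) ltac:(unfold v; lra) x Hx).
    assert (Rabs (Gf v x - Gf nus x) < f2e x - Gf nus x).
    { apply Hr'; try lra; unfold v; try lra. rewrite Rabs_right; lra. }
    apply Rabs_def2 in H. lra. }
  destruct (Req_dec nus lam) as [Heq|Hgt].
  -
    apply (zero_contra n m sigma p A1 A2 f1 f2 Xi b Hpar HA1 HA12 H1 H2 Hd1 Hd2 ltac:(lra)).
    intros t Ht. cbv zeta. fold lam. fold k. specialize (Hb t ltac:(lra)).
    rewrite Heq in Hb. rewrite HGf in Hb by lra. rewrite Hf2e in Hb by lra. exact Hb.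
  - assert (Hgt' : lam < nus) by lra.
    assert (Hnus1 : 1 < nus) by lra.
    assert (Htouch : exists c, 0 <= c <= b /\ Gf nus c = f2e c).
    { apply NNPP. intros Hno.
      assert (Hpos : forall x, 0 <= x <= b -> f2e x < Gf nus x).
      { intros x Hx. destruct (Hb x Hx) as [|Heq']; [assumption|exfalso; apply Hno; exists x; auto]. }
      assert (Hcont : forall x, 0 <= x <= b -> continuity_pt (fun y => Gf nus y - f2e y) x).
      { intros x Hx. apply continuity_pt_minus.
        - unfold Gf. apply continuity_pt_scal.
          apply (continuity_pt_comp (fun y => sf nus * y) f1e).
          + apply continuity_pt_scal. apply derivable_continuous_pt. apply derivable_pt_id.
          + apply (cont_ext _ _ _ _ _ _ _ H1). destruct (Harg nus x ltac:(lra) Hx). lra.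
        - apply (cont_ext _ _ _ _ _ _ _ H2). lra. }
      destruct (continuity_ab_min _ 0 b ltac:(lra) Hcont) as [mx [Hmx Hmx']].
      set (del := Gf nus mx - f2e mx).
      assert (Hdel : 0 < del) by (unfold del; specialize (Hpos mx Hmx'); lra).
      destruct (HUC del Hdel) as [r [Hr Hr']].
      set (v := nus - Rmin (r / 2) ((nus - lam) / 2)).
      assert (Hv1 : 0 < Rmin (r / 2) ((nus - lam) / 2)) by (apply Rmin_pos; lra).
      assert (Hv2 : Rmin (r / 2) ((nus - lam) / 2) <= r / 2) by apply Rmin_l.
      assert (Hv3 : Rmin (r / 2) ((nus - lam) / 2) <= (nus - lam) / 2) by apply Rmin_r.
      assert (HGv : Good v).
      { intros x Hx. assert (Rabs (Gf v x - Gf nus x) < del).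
        { apply Hr'; try (unfold v; lra). unfold v. rewrite Rabs_left; lra. }
        apply Rabs_def2 in H. specialize (Hmx x Hx). unfold del in *. lra. }
      assert (Hvlt : v < nus) by (unfold v; lra).
      assert (Hnub : ~ is_upper_bound SS v).
      { intros Hu. specialize (Hlub v Hu). lra. }
      apply Hnub. intros w Hw. destruct (Rle_or_lt w v) as [|Hwv]; [assumption|exfalso].
      destruct Hw as [Hw1 Hw2]. apply Hw2. apply (HGood_mono v); [unfold v in *; lra|exact HGv]. }
    destruct Htouch as [c [Hc1 Hc2]].
    assert (Hc0 : c <> 0).
    { intros ->. rewrite HGf0 in Hc2 by lra. unfold f2e in Hc2. rewrite Rmax_left in Hc2 by lra.
      rewrite H0f2 in Hc2. nra. }
    assert (Hcb : c <> b).
    { intros ->. rewrite HGf in Hc2 by lra. rewrite Hf2e in Hc2 by lra.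
      destruct (Harg nus b ltac:(lra) ltac:(lra)).
      assert (f1 b <= f1 (sf nus * b)) by (apply Hf1ni; lra). nra. }
    apply (tangency (S n) m sigma p A1 A2 f1 f2 Xi nus b c Hpar H1 H2 Hnus1 ltac:(lra)).
    + intros t Ht. cbv zeta. fold k. specialize (Hb t ltac:(lra)).
      rewrite HGf in Hb by lra. rewrite Hf2e in Hb by lra. exact Hb.
    + lra.
    + cbv zeta. fold k. rewrite HGf in Hc2 by lra. rewrite Hf2e in Hc2 by lra. exact Hc2.
Qed.
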